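(* Let $\mu$ be a PU-monotone. If $A\in H_n$ and $B\in H_k$ are both neither positive semidefinite nor negative semidefinite and satisfy $\|A_+\|_\infty=\|B_+\|_\infty$ and $\|A_-\|_\infty=\|B_-\|_\infty$, then $\mu(A)=\mu(B)$. That is, restricted to such non-definite matrices, $\mu(A)$ is a function of $(\|A_+\|_\infty,\|A_-\|_\infty)$.
   Context: $H_n$ denotes the $n\times n$ complex Hermitian matrices. A linear map $\Phi:H_n\to H_k$ is PU if it maps positive semidefinite matrices to positive semidefinite matrices and $\Phi(\mathbb{1})=\mathbb{1}$. A function $\mu:\bigcup_{n\in\mathbb N}H_n\to\mathbb R$ is a PU-monotone if $\mu(\Phi(A))\leq\mu(A)$ for all $n,k$, all PU maps $\Phi:H_n\to H_k$ and all $A\in H_n$. Every $A$ decomposes uniquely as $A=A_+-A_-$ with $A_\pm$ positive semidefinite and $A_+A_-=0$. $\|\cdot\|_\infty$ is the operator norm. *)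

(* Defs.v *)
From HB Require Import structures.
From mathcomp Require Import all_boot all_order all_algebra.
From mathcomp Require Import classical_sets reals.
From mathcomp.real_closed Require Import complex.
Set Implicit Arguments. Unset Strict Implicit. Unset Printing Implicit Defensive.
Import GRing.Theory Num.Theory.
Local Open Scope ring_scope.

Definition adjmx (R : realType) (m n : nat) (A : 'M[R[i]]_(m, n)) : 'M[R[i]]_(n, m) :=
  map_mx Num.conj A^T.

Definition is_herm (R : realType) (n : nat) (A : 'M[R[i]]_n) : Prop :=
  adjmx A = A.

Definition psdmx (R : realType) (n : nat) (A : 'M[R[i]]_n) : Prop :=
  is_herm A /\ forall v : 'cV[R[i]]_n, 0 <= (adjmx v *m A *m v) 0 0.

Definition vnorm (R : realType) (n : nat) (v : 'cV[R[i]]_n) : R :=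
  Num.sqrt (complex.Re ((adjmx v *m v) 0 0)).

Definition opnorm (R : realType) (n : nat) (A : 'M[R[i]]_n) : R :=
  sup [set r : R | exists v : 'cV[R[i]]_n, vnorm v <= 1 /\ r = vnorm (A *m v)].

(* Phi : H_n -> H_k is a (real-)linear positive unital map; only its values on
   H_n matter. *)
Definition is_PU (R : realType) (n k : nat) (Phi : 'M[R[i]]_n -> 'M[R[i]]_k) : Prop :=
  [/\ (forall A, is_herm A -> is_herm (Phi A)),
      (forall (a b : R) (A B : 'M[R[i]]_n), is_herm A -> is_herm B ->
         Phi ((a%:C)%C *: A + (b%:C)%C *: B) = (a%:C)%C *: Phi A + (b%:C)%C *: Phi B),
      (forall A, psdmx A -> psdmx (Phi A)) &
      Phi 1%:M = 1%:M].

(* mu : \bigcup_{n >= 1} H_n -> R (values on non-Hermitian matrices are irrelevant) *)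
Definition PU_monotone (R : realType) (mu : forall n : nat, 'M[R[i]]_n -> R) : Prop :=
  forall (n k : nat) (Phi : 'M[R[i]]_n -> 'M[R[i]]_k), (0 < n)%N -> (0 < k)%N ->
    is_PU Phi -> forall A, is_herm A -> mu k (Phi A) <= mu n A.

(* Main.v *)
Require Import Defs.
From HB Require Import structures.
From mathcomp Require Import all_boot all_order all_algebra.
From mathcomp Require Import classical_sets reals.
From mathcomp.real_closed Require Import complex.
From mathcomp Require Import sesquilinear spectral.
From mathcomp.algebra_tactics Require Import ring.
Import GRing.Theory Num.Theory Order.TTheory.
Set Implicit Arguments. Unset Strict Implicit. Unset Printing Implicit Defensive.
Local Open Scope ring_scope.

Section Basic.
Variable R : realType.
Local Notation C := R[i].

Lemma adjmxK m n (A : 'M[C]_(m, n)) : adjmx (adjmx A) = A.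
Proof. by apply/matrixP=> i j; rewrite !mxE conjCK. Qed.

Lemma adjmxM m n p (A : 'M[C]_(m, n)) (B : 'M[C]_(n, p)) :
  adjmx (A *m B) = adjmx B *m adjmx A.
Proof. by rewrite /adjmx trmx_mul map_mxM. Qed.

Lemma adjmxD m n (A B : 'M[C]_(m, n)) : adjmx (A + B) = adjmx A + adjmx B.
Proof. by apply/matrixP=> i j; rewrite !mxE rmorphD. Qed.

Lemma adjmxN m n (A : 'M[C]_(m, n)) : adjmx (- A) = - adjmx A.
Proof. by apply/matrixP=> i j; rewrite !mxE rmorphN. Qed.

Lemma adjmxZ m n c (A : 'M[C]_(m, n)) : adjmx (c *: A) = Num.conj c *: adjmx A.
Proof. by apply/matrixP=> i j; rewrite !mxE rmorphM. Qed.

Lemma adjmx0 m n : adjmx (0 : 'M[C]_(m, n)) = 0.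
Proof. by apply/matrixP=> i j; rewrite !mxE rmorph0. Qed.

Lemma adjmx1 n : adjmx (1%:M : 'M[C]_n) = 1%:M.
Proof. by apply/matrixP=> i j; rewrite !mxE eq_sym; case: eqP; rewrite ?rmorph1 ?rmorph0. Qed.

Lemma conj_realC (x : R) : Num.conj (x%:C)%C = (x%:C)%C.
Proof. exact: conjc_real. Qed.

Definition qf n (v : 'cV[C]_n) (X : 'M[C]_n) : C := (adjmx v *m X *m v) 0 0.

Lemma qfD n (v : 'cV[C]_n) (X Y : 'M[C]_n) : qf v (X + Y) = qf v X + qf v Y.
Proof. by rewrite /qf mulmxDr mulmxDl mxE. Qed.

Lemma qfN n (v : 'cV[C]_n) (X : 'M[C]_n) : qf v (- X) = - qf v X.
Proof. by rewrite /qf mulmxN mulNmx mxE. Qed.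

Lemma qfB n (v : 'cV[C]_n) (X Y : 'M[C]_n) : qf v (X - Y) = qf v X - qf v Y.
Proof. by rewrite qfD qfN. Qed.

Lemma qfZ n (v : 'cV[C]_n) c (X : 'M[C]_n) : qf v (c *: X) = c * qf v X.
Proof. by rewrite /qf -scalemxAr -scalemxAl mxE. Qed.

Lemma qf_conj n (v : 'cV[C]_n) (X : 'M[C]_n) : is_herm X -> Num.conj (qf v X) = qf v X.
Proof.
move=> hX.
have -> : Num.conj (qf v X) = adjmx (adjmx v *m X *m v) 0 0.
  rewrite /qf /adjmx [in RHS]mxE [in RHS]mxE. done.
by rewrite !adjmxM adjmxK hX mulmxA.
Qed.

Lemma herm_real n (v : 'cV[C]_n) (X : 'M[C]_n) : is_herm X -> qf v X \is Num.real.
Proof. by move=> hX; rewrite CrealE; apply/eqP; apply: qf_conj. Qed.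


Lemma qf_conjU n (U X : 'M[C]_n) (v : 'cV[C]_n) :
  qf v (U *m X *m adjmx U) = qf (adjmx U *m v) X.
Proof. by rewrite /qf adjmxM adjmxK !mulmxA. Qed.

Lemma qf_diag n (w : 'cV[C]_n) (e : 'rV[C]_n) :
  qf w (diag_mx e) = \sum_i e 0 i * (Num.conj (w i 0) * w i 0).
Proof.
rewrite /qf mul_mx_diag mxE; apply: eq_bigr => i _; rewrite !mxE.
by rewrite mulrA [_ * e 0 i]mulrC.
Qed.

Lemma qf_delta n (i : 'I_n) (e : 'rV[C]_n) :
  qf (delta_mx i 0) (diag_mx e) = e 0 i.
Proof.
rewrite qf_diag (bigD1 i) //= big1 => [|j /negbTE ji]; rewrite !mxE ?ji.
  by rewrite eqxx /= rmorph1 !mulr1 addr0.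
by rewrite /= rmorph0 !mul0r mulr0.
Qed.

Lemma qf1 n (v : 'cV[C]_n) : qf v 1%:M = (adjmx v *m v) 0 0.
Proof. by rewrite /qf mulmx1. Qed.


Lemma diag_mx0' n : diag_mx (0 : 'rV[C]_n) = 0.
Proof. by apply/matrixP=> i j; rewrite !mxE mul0rn. Qed.

Lemma vnorm_qf n (v : 'cV[C]_n) : vnorm v = Num.sqrt (complex.Re (qf v 1%:M)).
Proof. by rewrite qf1. Qed.

Lemma vnormM n (P : 'M[C]_n) (v : 'cV[C]_n) : is_herm P ->
  vnorm (P *m v) = Num.sqrt (complex.Re (qf v (P *m P))).
Proof. by move=> hP; rewrite /vnorm /qf adjmxM hP !mulmxA. Qed.

Lemma herm1 n : is_herm (1%:M : 'M[C]_n).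
Proof. exact: adjmx1. Qed.

Lemma psd_top n (P : 'M[C]_n) : (0 < n)%N -> psdmx P ->
  exists (a : R) (u : 'cV[C]_n), opnorm P = a /\ 0 <= a /\
     P *m u = (a%:C)%C *: u /\ qf u 1%:M = 1 /\
     (forall v, qf v P <= (a%:C)%C * qf v 1%:M) /\ (a = 0 -> P = 0).
Proof.
move=> n0 [hP Ppos].
have hs : P \is hermsymmx.
  by apply/is_hermitianmxP; rewrite expr0 scale1r; exact: esym hP.
have /orthomx_spectralP Peq := hermitian_normalmx hs.
set Q := spectralmx P in Peq; set d := spectral_diag P in Peq.
have Qu : Q \is unitarymx := spectral_unitarymx P.
rewrite invmx_unitary // in Peq.
set U := adjmx Q.
have QE : Q = adjmx U by rewrite adjmxK.
have UU1 : adjmx U *m U = 1%:M by rewrite -QE; apply/unitarymxP.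
have UU2 : U *m adjmx U = 1%:M.
  rewrite -QE /U.
  have -> : adjmx Q = invmx Q by rewrite invmx_unitary.
  by rewrite mulVmx // spectral_unit.
have PE : P = U *m diag_mx d *m adjmx U by rewrite -QE.
have dreal i : d 0 i \is Num.real.
  exact: (mxOverP (hermitian_spectral_diag_real hs) 0 i).
pose r i := complex.Re (d 0 i).
have dE i : d 0 i = ((r i)%:C)%C by rewrite /r RRe_real.
have r0 i : 0 <= r i.
  have := Ppos (U *m delta_mx i 0); rewrite -/(qf _ _) PE qf_conjU mulmxA UU1.
  by rewrite mul1mx qf_delta dE ler0c.
have [m _ Hm] := @arg_maxP _ R _ (Ordinal n0) xpredT r isT.
pose a := r m.
have a0 : 0 <= a := r0 m.
have dle i : d 0 i <= (a%:C)%C by rewrite dE lecR; exact: Hm.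
pose u : 'cV[C]_n := U *m delta_mx m 0.
have E1 : (1%:M : 'M[C]_n) = U *m diag_mx (const_mx 1) *m adjmx U.
  by rewrite diag_const_mx mulmx1 UU2.
have qf1E v : qf v 1%:M = \sum_i (Num.conj ((adjmx U *m v) i 0) * (adjmx U *m v) i 0).
  by rewrite E1 qf_conjU qf_diag; apply: eq_bigr => i _; rewrite mxE mul1r.
have uw : adjmx U *m u = delta_mx m 0 by rewrite mulmxA UU1 mul1mx.
have Pu : P *m u = (a%:C)%C *: u.
  rewrite PE -!mulmxA (mulmxA (adjmx U)) UU1 mul1mx.
  have -> : diag_mx d *m (delta_mx m 0 : 'cV[C]_n) = d 0 m *: delta_mx m 0.
    apply/matrixP=> i j; rewrite mul_diag_mx !mxE.
    by case: (eqVneq i m) => [->|]//= _; rewrite !mulr0.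
  by rewrite -scalemxAr dE.
have qu1 : qf u 1%:M = 1.
  by rewrite E1 qf_conjU uw qf_delta mxE.
have bound (v : 'cV[C]_n) : qf v P <= (a%:C)%C * qf v 1%:M.
  rewrite qf1E mulr_sumr PE qf_conjU qf_diag; apply: ler_sum => i _.
  by apply: ler_wpM2r => //; rewrite mulrC mul_conjC_ge0.
have PP : P *m P = U *m diag_mx (\row_j (d 0 j * d 0 j)) *m adjmx U.
  rewrite PE -!mulmxA (mulmxA (adjmx U) U) UU1 mul1mx !mulmxA.
  by rewrite -(mulmxA U) mulmx_diag.
have Re1 (v : 'cV[C]_n) : 0 <= complex.Re (qf v 1%:M).
  have : 0 <= qf v 1%:M.
    by rewrite qf1E; apply: sumr_ge0 => i _; rewrite mulrC mul_conjC_ge0.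
  by rewrite lecE => /andP[].
have ubS (v : 'cV[C]_n) : vnorm v <= 1 -> vnorm (P *m v) <= a.
  move=> vle; rewrite vnormM //.
  have h1 : qf v (P *m P) <= ((a * a)%:C)%C * qf v 1%:M.
    rewrite qf1E mulr_sumr PP qf_conjU qf_diag; apply: ler_sum => i _.
    apply: ler_wpM2r; first by rewrite mulrC mul_conjC_ge0.
    rewrite mxE !dE -!rmorphM lecR /=.
    by apply: ler_pM; rewrite ?r0 //; exact: Hm.
  have hr : qf v 1%:M = ((complex.Re (qf v 1%:M))%:C)%C.
    by rewrite RRe_real //; apply: herm_real; exact: herm1.
  move: h1; rewrite hr -rmorphM lecE => /andP[_ h2].
  have h3 : complex.Re (qf v 1%:M) <= 1.
    move: vle; rewrite vnorm_qf -[X in _ <= X -> _]sqrtr1 ler_sqrt //.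
  apply: (le_trans (ler_wsqrtr h2)).
  rewrite -[X in _ <= X](@ger0_norm _ a) // -sqrtr_sqr ler_sqrt ?sqr_ge0 //.
  by rewrite expr2 ler_piMr // mulr_ge0.
have Sa : vnorm u <= 1 /\ a = vnorm (P *m u).
  split; first by rewrite vnorm_qf qu1 /= sqrtr1.
  rewrite vnormM // PP qf_conjU uw qf_delta mxE !dE -rmorphM /=.
  by rewrite -expr2 sqrtr_sqr ger0_norm.
exists a, u; do !split => //.
- rewrite /opnorm.
  apply: le_anti; rewrite ge_sup /=; last 2 first.
  + by exists a; exists u.
  + by move=> x [v [vle ->]]; exact: ubS.
  apply: (@sup_upper_bound _ _ _ a); last by exists u.
  split; first by exists a; exists u.
  by exists a => x [v [vle ->]]; exact: ubS.
- move=> a00; rewrite PE.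
  have -> : d = 0.
    apply/rowP=> i; rewrite mxE dE.
    have -> : r i = 0 by apply/eqP; rewrite eq_le r0 andbT; apply: le_trans (Hm i isT) _; rewrite -/a a00.
    by rewrite rmorph0.
  by rewrite diag_mx0' mulmx0 mul0mx.
Qed.


Definition diag2 (x y : C) : 'M[C]_2 :=
  diag_mx (\row_(i < 2) if i == ord0 then x else y).

Lemma diag2_00 x y : diag2 x y ord0 ord0 = x.
Proof. by rewrite !mxE. Qed.

Lemma diag2_11 x y : diag2 x y ord_max ord_max = y.
Proof. by rewrite !mxE. Qed.

Lemma qf_diag_ii n (i : 'I_n) (Y : 'M[C]_n) : qf (delta_mx i 0) Y = Y i i.
Proof.
rewrite /qf mxE (bigD1 i) //= big1 => [|j /negbTE ji].
  rewrite !mxE (bigD1 i) //= big1 => [|j /negbTE ji].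
    by rewrite !mxE eqxx /= rmorph1 mul1r mulr1 !addr0.
  by rewrite !mxE ji /= rmorph0 mul0r.
by rewrite [delta_mx _ _ _ _]mxE ji mulr0.
Qed.

Lemma psd_diag_ge0 n (i : 'I_n) (Y : 'M[C]_n) : psdmx Y -> 0 <= Y i i.
Proof. by case=> _ /(_ (delta_mx i 0)); rewrite -/(qf _ _) qf_diag_ii. Qed.

Lemma herm_diag_real n (i : 'I_n) (Y : 'M[C]_n) : is_herm Y -> Num.conj (Y i i) = Y i i.
Proof. by move=> hY; rewrite -{2}hY !mxE. Qed.

Lemma diag2_herm x y : Num.conj x = x -> Num.conj y = y -> is_herm (diag2 x y).
Proof.
move=> hx hy; apply/matrixP=> i j; rewrite !mxE.
have [->|ne] := eqVneq i j; first by rewrite !mulr1n; case: ifP.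
by rewrite !mulr0n rmorph0.
Qed.

Lemma diag2_psd x y : 0 <= x -> 0 <= y -> psdmx (diag2 x y).
Proof.
move=> x0 y0; split.
  by apply: diag2_herm; apply/CrealP; apply: ger0_real.
move=> v; rewrite -/(qf _ _) qf_diag; apply: sumr_ge0 => i _.
by rewrite mxE; apply: mulr_ge0; [case: ifP | rewrite mulrC mul_conjC_ge0].
Qed.

Lemma diag2_lin (a b : C) x y x' y' :
  diag2 (a * x + b * x') (a * y + b * y') = a *: diag2 x y + b *: diag2 x' y'.
Proof.
apply/matrixP=> i j; rewrite !mxE.
by case: (i == j); case: (i == ord0); rewrite ?mulr1n ?mulr0n ?mulr0 ?addr0.
Qed.

Lemma diag2_1 : diag2 1 1 = 1%:M.
Proof.
rewrite /diag2 -diag_const_mx; congr diag_mx; apply/rowP=> i; rewrite !mxE.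
by case: ifP.
Qed.


End Basic.

Section B2.
Variable R : realType.
Local Notation C := R[i].
Lemma s0_lem (a b : R) : 0 < a -> 0 < b -> 0 <= (((a + b)%:C)%C)^-1 :> C.
Proof. move=> a0 b0.
rewrite invr_ge0.
rewrite ler0c.
apply: addr_ge0; exact: ltW.
Qed.

Lemma pE_lem n (A Ap Am : 'M[C]_n) (b : R) (s : C) : 0 <= s -> A = Ap - Am -> psdmx Ap ->
  (forall v, qf v Am <= (b%:C)%C * qf v 1%:M) -> is_herm (s *: (A + (b%:C)%C *: 1%:M)) ->
  psdmx (s *: (A + (b%:C)%C *: 1%:M)).
Proof.
move=> s0 AE pAp bAm hE.
split => // v; rewrite -/(qf _ _).
rewrite qfZ qfD qfZ.
apply: mulr_ge0; first exact: s0.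
rewrite AE qfB -addrA.
apply: addr_ge0; first by case: pAp => _; apply.
rewrite addrC subr_ge0; exact: bAm.
Qed.

Lemma psd_herm n (X : 'M[C]_n) : psdmx X -> is_herm X.
Proof. by case. Qed.

Lemma pF_lem n (A Ap Am : 'M[C]_n) (a : R) (s : C) : 0 <= s -> A = Ap - Am -> psdmx Am ->
  (forall v, qf v Ap <= (a%:C)%C * qf v 1%:M) -> is_herm (s *: ((a%:C)%C *: 1%:M - A)) ->
  psdmx (s *: ((a%:C)%C *: 1%:M - A)).
Proof.
move=> s0 AE pAm bAp hF.
split => // v; rewrite -/(qf _ _) qfZ qfB qfZ.
apply: mulr_ge0; first exact: s0.
rewrite AE qfB opprB addrCA addrC.
apply: addr_ge0; last by case: pAm => _; apply.
rewrite subr_ge0; exact: bAp.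
Qed.

Lemma PU1_lem n (u w : 'cV[C]_n) : qf u 1%:M = 1 -> qf w 1%:M = 1 ->
  is_PU (fun X => diag2 (qf u X) (qf w X)).
Proof.
move=> qu1 qw1; split.
- move=> X hX; apply: diag2_herm; exact: qf_conj.
- move=> x y X Y hX hY; rewrite !qfD !qfZ; exact: diag2_lin.
- move=> X [hX pX]; apply: diag2_psd; [exact: pX | exact: pX].
- by rewrite qu1 qw1 diag2_1.
Qed.

Lemma PU2_lem n (E F : 'M[C]_n) : psdmx E -> psdmx F -> E + F = 1%:M ->
  is_PU (fun Y : 'M[C]_2 => Y ord0 ord0 *: E + Y ord_max ord_max *: F).
Proof.
move=> pE pF EF.
have hE := psd_herm pE; have hF := psd_herm pF.
have herm2 (Y : 'M[C]_2) : is_herm Y -> is_herm (Y ord0 ord0 *: E + Y ord_max ord_max *: F).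
  move=> hY; rewrite /is_herm adjmxD !adjmxZ hE hF.
  by rewrite !herm_diag_real.
split.
- exact: herm2.
- move=> x y X Y _ _; rewrite !mxE !scalerDl -!scalerA !scalerDr.
  rewrite [LHS]addrACA.
  done.
- move=> Y pY; have hY := psd_herm pY; split; first exact: herm2.
  move=> v; rewrite -/(qf _ _) qfD !qfZ.
  apply: addr_ge0; apply: mulr_ge0; try exact: psd_diag_ge0.
    by case: pE => _; apply.
  by case: pF => _; apply.
- by rewrite !mxE !eqxx !mulr1n !scale1r.
Qed.

Lemma comb_lem n (A : 'M[C]_n) (p q r t : C) :
  p *: (A + q *: 1%:M) + r *: (t *: 1%:M - A) = (p - r) *: A + (p * q + r * t) *: 1%:M.
Proof.
rewrite scalerDr scalerBr !scalerA scalerBl scalerDl.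
by rewrite [(r * t) *: _ - _]addrC addrACA.
Qed.

Lemma EF_lem n (A : 'M[C]_n) (x y : C) : x + y != 0 ->
  (x + y)^-1 *: (A + y *: 1%:M) + (x + y)^-1 *: (x *: 1%:M - A) = 1%:M.
Proof.
move=> xy; rewrite comb_lem subrr scale0r add0r.
have -> : (x + y)^-1 * y + (x + y)^-1 * x = 1 by field.
by rewrite scale1r.
Qed.

Lemma Phi2D_lem n (A : 'M[C]_n) (x y : C) : x + y != 0 ->
  x *: ((x + y)^-1 *: (A + y *: 1%:M)) + (- y) *: ((x + y)^-1 *: (x *: 1%:M - A)) = A.
Proof.
move=> xy; rewrite !scalerA comb_lem.
have -> : x * (x + y)^-1 - - y * (x + y)^-1 = 1 by field.
have -> : x * (x + y)^-1 * y + - y * (x + y)^-1 * x = 0 by field.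
by rewrite scale0r addr0 scale1r.
Qed.

Lemma hE_lem n (A : 'M[C]_n) (s c : C) : is_herm A -> Num.conj s = s -> Num.conj c = c ->
  is_herm (s *: (A + c *: 1%:M)).
Proof. by move=> hA hs hc; rewrite /is_herm adjmxZ adjmxD adjmxZ adjmx1 hA hs hc. Qed.

Lemma hF_lem n (A : 'M[C]_n) (s c : C) : is_herm A -> Num.conj s = s -> Num.conj c = c ->
  is_herm (s *: (c *: 1%:M - A)).
Proof. by move=> hA hs hc; rewrite /is_herm adjmxZ adjmxD adjmxN adjmxZ adjmx1 hA hs hc. Qed.

Lemma qf_eig n (X : 'M[C]_n) (u : 'cV[C]_n) c : X *m u = c *: u -> qf u X = c * qf u 1%:M.
Proof. by move=> Xu; rewrite /qf -mulmxA Xu -scalemxAr mxE mulmx1. Qed.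

Lemma eig_kill n (P M : 'M[C]_n) (u : 'cV[C]_n) (a : R) :
  0 < a -> M *m P = 0 -> P *m u = (a%:C)%C *: u -> M *m u = 0.
Proof.
move=> a0 MP Pu.
have : (a%:C)%C *: (M *m u) = 0 by rewrite scalemxAr -Pu mulmxA MP mul0mx.
move/eqP; rewrite scaler_eq0 => /orP[|/eqP //].
move=> /eqP/(@complexI R a 0) a00; move: a0; rewrite a00 ltxx //.
Qed.

Definition Dm (a b : R) : 'M[C]_2 := diag2 (a%:C)%C (- (b%:C)%C).

Lemma reduce (mu : forall n : nat, 'M[C]_n -> R) n (A Ap Am : 'M[C]_n) :
  PU_monotone mu -> is_herm A -> ~ psdmx A -> ~ psdmx (- A) ->
  psdmx Ap -> psdmx Am -> A = Ap - Am -> Ap *m Am = 0 ->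
  mu n A = mu 2 (Dm (opnorm Ap) (opnorm Am)).
Proof.
move=> muP hA nA nNA pAp pAm AE ApAm.
have [n_eq0|n0] := posnP n.
  by subst n; exfalso; apply: nA; split=> // v; rewrite mxE big_ord0.
have [a [u [oa [a0 [Apu [qu1 [bAp Ap0]]]]]]] := psd_top n0 pAp.
have [b [w [ob [b0 [Amw [qw1 [bAm Am0]]]]]]] := psd_top n0 pAm.
rewrite oa ob.
have hAp := psd_herm pAp; have hAm := psd_herm pAm.
have apos : 0 < a.
  rewrite lt_def a0 andbT; apply/eqP => /Ap0 Ap00; apply: nNA.
  by rewrite AE Ap00 sub0r opprK.
have bpos : 0 < b.
  rewrite lt_def b0 andbT; apply/eqP => /Am0 Am00; apply: nA.
  by rewrite AE Am00 subr0.
have AmAp : Am *m Ap = 0.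
  by rewrite -hAm -hAp -adjmxM ApAm adjmx0.
have Amu : Am *m u = 0 := eig_kill apos AmAp Apu.
have Apw : Ap *m w = 0 := eig_kill bpos ApAm Amw.
have Au : A *m u = (a%:C)%C *: u by rewrite AE mulmxBl Apu Amu subr0.
have Aw : A *m w = (- (b%:C)%C) *: w by rewrite AE mulmxBl Apw Amw sub0r scaleNr.
have quA : qf u A = (a%:C)%C by rewrite (qf_eig Au) qu1 mulr1.
have qwA : qf w A = - (b%:C)%C by rewrite (qf_eig Aw) qw1 mulr1.
have h1 := muP n 2%N _ n0 isT (PU1_lem qu1 qw1) A hA.
rewrite /= quA qwA in h1.
have ab0 : (a%:C)%C + (b%:C)%C != 0 :> C.
  rewrite -rmorphD; apply/eqP => /(@complexI R (a + b) 0) h.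
  by move: (addr_gt0 apos bpos); rewrite h ltxx.
have s0 : 0 <= ((a%:C)%C + (b%:C)%C)^-1 :> C by rewrite -rmorphD s0_lem.
have sJ : Num.conj (((a%:C)%C + (b%:C)%C)^-1) = ((a%:C)%C + (b%:C)%C)^-1 :> C.
  by apply/CrealP; rewrite realV -rmorphD; apply/complex_realP; exists (a + b).
have pE := pE_lem s0 AE pAp bAm (hE_lem hA sJ (conj_realC b)).
have pF := pF_lem s0 AE pAm bAp (hF_lem hA sJ (conj_realC a)).
have PU2 := PU2_lem pE pF (EF_lem A ab0).
have hD : is_herm (Dm a b).
  apply: diag2_herm; apply/CrealP; rewrite ?realN; apply/complex_realP; [exists a | exists b] => //.
have h2 := muP 2%N n _ isT n0 PU2 (Dm a b) hD.
rewrite /= /Dm diag2_00 diag2_11 Phi2D_lem // in h2.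
by apply: le_anti; rewrite h2.
Qed.
End B2.

Unset Implicit Arguments.

Theorem mainTheorem9 (R : realType) (mu : forall n : nat, 'M[R[i]]_n -> R)
  (n k : nat) (A Ap Am : 'M[R[i]]_n) (B Bp Bm : 'M[R[i]]_k) :
  PU_monotone mu ->
  is_herm A -> is_herm B ->
  ~ psdmx A -> ~ psdmx (- A) -> ~ psdmx B -> ~ psdmx (- B) ->
  psdmx Ap -> psdmx Am -> A = Ap - Am -> Ap *m Am = 0 ->
  psdmx Bp -> psdmx Bm -> B = Bp - Bm -> Bp *m Bm = 0 ->
  opnorm Ap = opnorm Bp -> opnorm Am = opnorm Bm ->
  mu n A = mu k B.
Proof.
move=> muP hA hB nA nNA nB nNB pAp pAm AE ApAm pBp pBm BE BpBm oP oM.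
rewrite (reduce muP hA nA nNA pAp pAm AE ApAm).
by rewrite (reduce muP hB nB nNB pBp pBm BE BpBm) oP oM.
Qed.
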